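(* Let $p,q\in(0,1/2)$ and let $S_1(x)=px$, $S_2(x)=qx$, $S_3(x)=px+1-p$, $S_4(x)=qx+1-q$ be maps $\mathbb R\to\mathbb R$. Let $K=K_{pq}$ be the attractor of $\{S_1,S_2,S_3,S_4\}$ and $A=S_3(K)\cup S_4(K)$. Then: (i) $S_1S_2=S_2S_1$ and $S_3S_4=S_4S_3$; (ii) $K=\omega(K)$, where $\omega(x)=1-x$; (iii) for $i=1,2$ and any integers $m\neq n$, $S_i^m(A)\cap S_i^n(A)=\varnothing$; (iv) for any integers $m,n\ge 0$, $S_1^mS_2^n(K)\subseteq S_1^m(K)\cap S_2^n(K)$; (v) $K\setminus\{0\}=\bigcup_{m,n=0}^{\infty}S_1^mS_2^n(A)$.
   Context: The attractor of a finite system of contractions $\{S_1,\dots,S_m\}$ of $\mathbb R$ is the unique nonempty compact set $K$ with $K=\bigcup_i S_i(K)$. Powers $S_i^m$ denote $m$-fold composition (with $S_i^0=\mathrm{Id}$ and negative powers meaning powers of the inverse map). *)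

(* Defs.v *)
From HB Require Import structures.
From mathcomp Require Import all_boot all_order all_algebra.
From mathcomp Require Import all_classical all_reals all_analysis.
Set Implicit Arguments. Unset Strict Implicit. Unset Printing Implicit Defensive.
Import Order.TTheory GRing.Theory Num.Theory.
Import numFieldNormedType.Exports.
Local Open Scope ring_scope.
Local Open Scope classical_set_scope.

Definition S1 {R : realType} (p : R) (x : R) : R := p * x.
Definition S2 {R : realType} (q : R) (x : R) : R := q * x.
Definition S3 {R : realType} (p : R) (x : R) : R := p * x + 1 - p.
Definition S4 {R : realType} (q : R) (x : R) : R := q * x + 1 - q.
Definition omega {R : realType} (x : R) : R := 1 - x.

Definition Slin_inv {R : realType} (c : R) (x : R) : R := x / c.

(* Integer power of a map f with given inverse finv:
   f^m = m-fold composition for m >= 0, (finv)^|m| for m < 0. *)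
Definition zpow_map {T : Type} (f finv : T -> T) (m : int) : T -> T :=
  match m with
  | Posz n => iter n f
  | Negz n => iter n.+1 finv
  end.

Definition is_attractor {R : realType} (fs : seq (R -> R)) (K : set R) : Prop :=
  K !=set0 /\ compact K /\ K = \bigcup_(i in [set i : nat | (i < size fs)%N]) (nth id fs i @` K).

(* Main.v *)
Require Import Defs.
From HB Require Import structures.
From mathcomp Require Import all_boot all_order all_algebra.
From mathcomp Require Import all_classical all_reals all_analysis.
From mathcomp Require Import lra ring.
Import Order.TTheory GRing.Theory Num.Theory.
Import numFieldNormedType.Exports.
Local Open Scope ring_scope.
Local Open Scope classical_set_scope.

Lemma geo_small (R : realType) (e : R) : 0 < e -> exists n : nat, (2^-1) ^+ n < e.
Proof.
move=> e0.
have b0 : 0 <= e^-1 by rewrite invr_ge0 ltW.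
have hb := archi_boundP b0.
set n := Num.Def.archi_bound _ in hb.
exists n.
have h1 : (n.+1%:R : R) <= 2 ^+ n.
  rewrite -natrX ler_nat. exact: ltn_expl.
rewrite exprVn.
have h2 : e^-1 < 2 ^+ n.
  apply: lt_le_trans h1. apply: lt_le_trans hb _. rewrite ler_nat. done.
have p2 : 0 < (2:R) ^+ n by rewrite exprn_gt0.
rewrite -(invrK e) ltf_pV2 ?posrE ?invr_gt0 //.
Qed.

Lemma key (R : realType) (P : (R -> R) -> Prop) (B K' : set R) (M z0 : R) :
  (forall f, P f -> forall u v, `|f u - f v| <= 2^-1 * `|u - v|) ->
  (forall x, B x -> `|x| <= M) ->
  (forall x, B x -> exists f y, P f /\ B y /\ x = f y) ->
  (forall f z, P f -> K' z -> K' (f z)) ->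
  K' z0 ->
  (forall x, (forall e : R, 0 < e -> exists z, K' z /\ `|x - z| < e) -> K' x) ->
  B `<=` K'.
Proof.
move=> Lip Bd Dec Inv Kz0 Cl.
have claim : forall n x, B x -> exists F y, B y /\
   (forall u v, `|F u - F v| <= (2^-1) ^+ n * `|u - v|) /\
   (forall z, K' z -> K' (F z)) /\ x = F y.
  elim=> [|n IH] x Bx.
    exists id, x; split => //; split => //. move=> u v; rewrite expr0 mul1r //.
  have [F [y [By [LF [IF ->]]]]] := IH x Bx.
  have [f [y' [Pf [By' ->]]]] := Dec y By.
  exists (F \o f), y'; split => //; split; last first.
    split => // z Kz; apply: IF; exact: Inv.
  move=> u v /=. apply: le_trans (LF _ _) _.
  rewrite exprSr -mulrA ler_wpM2l //; last exact: Lip.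
move=> x Bx; apply: Cl => e e0.
have M0 : 0 <= M by apply: le_trans (Bd x Bx); rewrite normr_ge0.
set C := M + `|z0| + 1.
have C0 : 0 < C by rewrite /C; have := normr_ge0 z0; lra.
have [n Hn] := @geo_small R _ (divr_gt0 e0 C0).
have [F [y [By [LF [IF ->]]]]] := claim n x Bx.
exists (F z0); split; first exact: IF.
apply: le_lt_trans (LF _ _) _.
have hy : `|y - z0| <= C.
  apply: le_trans (ler_normB _ _) _. have := Bd y By. rewrite /C; lra.
have g0 : 0 <= (2^-1 : R) ^+ n by rewrite exprn_ge0 // invr_ge0.
apply: le_lt_trans (ler_wpM2l g0 hy) _.
by rewrite -ltr_pdivlMr.
Qed.

Lemma cl (R : realType) (K : set R) : compact K -> forall x, (forall e : R, 0 < e -> exists z, K z /\ `|x - z| < e) -> K x.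
Proof.
move=> cK x H. apply: (compact_closed _ cK).
  exact: Rhausdorff.
move=> B /nbhs_ballP [e /= e0 HB]. have [z [Kz Hz]] := H e e0.
exists z; split => //. apply: HB. rewrite /ball /=. done.
Qed.

Lemma bnd (R : realType) (K : set R) : compact K -> exists M : R, forall x, K x -> `|x| <= M.
Proof.
move=> /compact_bounded [M [_ HM]]. exists (M+1). move=> x Kx. apply: (HM (M+1)).
 lra. done.
Qed.

Lemma itM (R : realType) (c x : R) n : iter n (fun y => c * y) x = c ^+ n * x.
Proof. elim: n => [|n IH] /=; first by rewrite expr0 mul1r. by rewrite IH exprS mulrA. Qed.

Lemma itV (R : realType) (c x : R) n : iter n (Slin_inv c) x = x / c ^+ n.
Proof.
elim: n => [|n IH] /=; first by rewrite expr0 invr1 mulr1.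
by rewrite IH /Slin_inv exprSr invfM mulrA.
Qed.

Lemma zp (R : realType) (c x : R) m : c != 0 ->
  zpow_map (fun y => c * y) (Slin_inv c) m x = c ^ m * x.
Proof.
move=> c0; case: m => n; first by rewrite /= itM.
by rewrite /zpow_map itV mulrC.
Qed.

Lemma dis (R : realType) (c a b : R) (m n : int) : 0 < c < 1/2 ->
  1/2 < a <= 1 -> 1/2 < b <= 1 -> m < n -> c ^ m * a <> c ^ n * b.
Proof.
move=> /andP[c0 c2] /andP[a1 a2] /andP[b1 b2] mn E.
have cn0 : c != 0 by rewrite gt_eqF.
have hd : 0 < n - m by rewrite subr_gt0.
case Ed : (n - m) hd => [[|k]|k] // _.
have En : n = m + (k.+1)%:Z by rewrite -Ed addrC subrK.
rewrite En expfzDr // -mulrA in E.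
have E' := mulfI (expfz_neq0 m cn0) E.
move: E'; rewrite (_ : c ^ (k.+1)%:Z = c ^+ k.+1) // exprS.
have t0 : 0 <= c ^+ k by rewrite exprn_ge0 // ltW.
have t1 : c ^+ k <= 1 by rewrite exprn_ile1 // ltW; lra.
move: t0 t1; set t := c ^+ k => t0 t1 Ea.
have u1 : c * t <= c by nra.
have u0 : 0 <= c * t by nra.
move: u0 u1 Ea; set u := c * t => u0 u1 Ea.
have : u * b <= u by nra.
lra.
Qed.

Lemma disj (R : realType) (c : R) (A : set R) : 0 < c < 1/2 ->
  (forall a, A a -> 1/2 < a <= 1) -> forall m n : int, m <> n ->
  (zpow_map (fun x => c * x) (Slin_inv c) m @` A) `&` (zpow_map (fun x => c * x) (Slin_inv c) n @` A) = set0.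
Proof.
move=> hc hA m n mn.
have cn0 : c != 0 by case/andP: hc => c0 _; rewrite gt_eqF.
rewrite -subset0 => x [[a Aa <-] [b Ab]]; rewrite !zp // => E.
case: (ltgtP m n) => h.
- exfalso; exact: (@dis R c a b m n hc (hA a Aa) (hA b Ab) h (esym E)).
- exfalso; exact: (@dis R c b a n m hc (hA b Ab) (hA a Aa) h E).
- by exfalso; apply: mn.
Qed.

Theorem proposition1 (R : realType) (p q : R) (K : set R) :
  0 < p < 1/2 -> 0 < q < 1/2 ->
  is_attractor [:: S1 p; S2 q; S3 p; S4 q] K ->
  let A := (S3 p @` K) `|` (S4 q @` K) in
  (* (i) *)
  (S1 p \o S2 q = S2 q \o S1 p /\ S3 p \o S4 q = S4 q \o S3 p) /\
  (* (ii) *)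
  K = omega @` K /\
  (* (iii) *)
  (forall m n : int, m <> n ->
     (zpow_map (S1 p) (Slin_inv p) m @` A) `&` (zpow_map (S1 p) (Slin_inv p) n @` A) = set0 /\
     (zpow_map (S2 q) (Slin_inv q) m @` A) `&` (zpow_map (S2 q) (Slin_inv q) n @` A) = set0) /\
  (* (iv) *)
  (forall m n : nat,
     (iter m (S1 p) \o iter n (S2 q)) @` K `<=` (iter m (S1 p) @` K) `&` (iter n (S2 q) @` K)) /\
  (* (v) *)
  K `\ 0 = \bigcup_(mn in [set: nat * nat]) ((iter mn.1 (S1 p) \o iter mn.2 (S2 q)) @` A).
Proof.
move=> hp hq [K0 [cK HK]] A.
have /andP[p0 p2] := hp. have /andP[q0 q2] := hq.
have Kdec : forall x, K x -> exists y, K y /\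
    (x = S1 p y \/ x = S2 q y \/ x = S3 p y \/ x = S4 q y).
  move=> x; rewrite {1}HK => -[i /= Hi [y Ky <-]]; exists y; split => //.
  by case: i Hi => [|[|[|[|i]]]] //= _; auto.
have KS : forall y, K y -> K (S1 p y) /\ K (S2 q y) /\ K (S3 p y) /\ K (S4 q y).
  move=> y Ky; rewrite HK; split; [|split; [|split]].
  - by exists 0%N => //; exists y.
  - by exists 1%N => //; exists y.
  - by exists 2%N => //; exists y.
  - by exists 3%N => //; exists y.
pose Fam (f : R -> R) := f = S1 p \/ f = S2 q \/ f = S3 p \/ f = S4 q.
have linc : forall c : R, 0 < c < 1/2 -> forall u v, `|c * u - c * v| <= 2^-1 * `|u - v|.
  move=> c /andP[c0 c2] u v; rewrite -mulrBr normrM gtr0_norm // ler_wpM2r //; lra.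
have Lip : forall f, Fam f -> forall u v, `|f u - f v| <= 2^-1 * `|u - v|.
  move=> f [->|[->|[->|->]]] u v; rewrite /S1 /S2 /S3 /S4.
  - exact: linc.
  - exact: linc.
  - rewrite (_ : p * u + 1 - p - (p * v + 1 - p) = p * u - p * v); last by ring.
    exact: linc.
  - rewrite (_ : q * u + 1 - q - (q * v + 1 - q) = q * u - q * v); last by ring.
    exact: linc.
have FK : forall f y, Fam f -> K y -> K (f y).
  move=> f y [->|[->|[->|->]]] Ky; have := KS y Ky; tauto.
have KdecF : forall x, K x -> exists f y, Fam f /\ K y /\ x = f y.
  move=> x Kx; have [y [Ky [->|[->|[->|->]]]]] := Kdec x Kx.
  - by exists (S1 p), y; split => //; left.
  - by exists (S2 q), y; split => //; right; left.
  - by exists (S3 p), y; split => //; right; right; left.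
  - by exists (S4 q), y; split => //; right; right; right.
have [M HM] := @bnd R K cK.
have K01 : K `<=` [set x : R | 0 <= x <= 1].
  apply: (@key R Fam K [set x : R | 0 <= x <= 1] M 0) => //.
  - move=> f z [->|[->|[->|->]]] /= /andP[z0 z1]; rewrite /S1 /S2 /S3 /S4;
      apply/andP; split; nra.
  - by rewrite /= lexx ler01.
  - move=> x H /=; apply/andP; split.
    + rewrite leNgt; apply/negP => x0.
      have [z [/= /andP[z0 z1] Hz]] := H (- x) ltac:(by rewrite oppr_gt0).
      move: Hz; rewrite ltr_norml; lra.
    + rewrite leNgt; apply/negP => x1.
      have [z [/= /andP[z0 z1] Hz]] := H (x - 1) ltac:(by rewrite subr_gt0).
      move: Hz; rewrite ltr_norml; lra.
have Kcl := @cl R K cK.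
split.
  split; apply: funext => x /=; rewrite /S1 /S2 /S3 /S4; ring.
split.
  have [z0 Kz0] := K0.
  have Hsub : omega @` K `<=` K.
    apply: (@key R Fam (omega @` K) K 1 z0) => //.
    - move=> x [y Ky <-]; have /andP[y0 y1] := K01 y Ky.
      rewrite /omega ler_norml; apply/andP; split; lra.
    - move=> x [y Ky <-]; have [y' [Ky' [->|[->|[->|->]]]]] := Kdec y Ky.
      + exists (S3 p), (omega y'); split; first by right; right; left.
        split; first by exists y'. rewrite /omega /S1 /S3; ring.
      + exists (S4 q), (omega y'); split; first by right; right; right.
        split; first by exists y'. rewrite /omega /S2 /S4; ring.
      + exists (S1 p), (omega y'); split; first by left.
        split; first by exists y'. rewrite /omega /S1 /S3; ring.
      + exists (S2 q), (omega y'); split; first by right; left.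
        split; first by exists y'. rewrite /omega /S2 /S4; ring.
  apply/seteqP; split => // x Kx.
  exists (omega x); first by apply: Hsub; exists x.
  rewrite /omega; ring.
have Abnd : forall a, A a -> 1/2 < a <= 1.
  move=> a [[y Ky <-]|[y Ky <-]]; have /andP[y0 y1] := K01 y Ky;
    rewrite /S3 /S4; apply/andP; split; nra.
split.
  move=> m n mn; split.
  - exact: (@disj R p A hp Abnd m n mn).
  - exact: (@disj R q A hq Abnd m n mn).
have KS1 : forall m y, K y -> K (iter m (S1 p) y).
  elim=> [|m IH] y Ky //=; have := KS _ (IH y Ky); tauto.
have KS2 : forall m y, K y -> K (iter m (S2 q) y).
  elim=> [|m IH] y Ky //=; have := KS _ (IH y Ky); tauto.
have comm : forall m n y, iter n (S2 q) (iter m (S1 p) y) = iter m (S1 p) (iter n (S2 q) y).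
  move=> m n y; rewrite /S1 /S2 !itM; exact: mulrCA.
split.
  move=> m n x [y Ky <-] /=; split.
  - by exists (iter n (S2 q) y) => //; apply: KS2.
  - by exists (iter m (S1 p) y); [apply: KS1 | apply: comm].
have AK : A `<=` K.
  move=> a [[y Ky <-]|[y Ky <-]]; have := KS y Ky; tauto.
have claim : forall N x, K x -> (2^-1 : R) ^+ N < x ->
    exists m n a, A a /\ x = iter m (S1 p) (iter n (S2 q) a).
  elim=> [|N IH] x Kx hx.
    have /andP[_ x1] := K01 x Kx; move: hx; rewrite expr0; lra.
  have /andP[x0 x1] := K01 x Kx.
  have [y [Ky [Ex|[Ex|[Ex|Ex]]]]] := Kdec x Kx.
  - have /andP[y0 y1] := K01 y Ky.
    have hy : (2^-1 : R) ^+ N < y.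
      move: hx; rewrite exprSr Ex /S1.
      have : 0 <= (2^-1 : R) ^+ N by rewrite exprn_ge0 // invr_ge0.
      set t := (2^-1 : R) ^+ N => t0 ht; nra.
    have [m [n [a [Aa Ea]]]] := IH y Ky hy.
    by exists m.+1, n, a; split => //; rewrite Ex Ea.
  - have /andP[y0 y1] := K01 y Ky.
    have hy : (2^-1 : R) ^+ N < y.
      move: hx; rewrite exprSr Ex /S2.
      have : 0 <= (2^-1 : R) ^+ N by rewrite exprn_ge0 // invr_ge0.
      set t := (2^-1 : R) ^+ N => t0 ht; nra.
    have [m [n [a [Aa Ea]]]] := IH y Ky hy.
    exists m, n.+1, a; split => //; rewrite Ex Ea.
    exact: (comm m 1%N (iter n (S2 q) a)).
  - by exists 0%N, 0%N, x; split => //; left; exists y.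
  - by exists 0%N, 0%N, x; split => //; right; exists y.
apply/seteqP; split.
- move=> x [Kx nx0].
  have /andP[x0 _] := K01 x Kx.
  have xp : 0 < x by rewrite lt_neqAle x0 andbT eq_sym; apply/eqP.
  have [N HN] := @geo_small R x xp.
  have [m [n [a [Aa ->]]]] := claim N x Kx HN.
  by exists (m, n) => //; exists a.
- move=> x [[m n] _ [a Aa <-]] /=; split.
  + by apply: KS1; apply: KS2; apply: AK.
  + have /andP[a0 _] := Abnd a Aa.
    rewrite /S1 /S2 !itM => /eqP; rewrite gt_eqF //.
    by rewrite !mulr_gt0 ?exprn_gt0 //; lra.
Qed.
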